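(* For every MSSP instance there exists an optimal autonomous profile, i.e. $\pi^*\in\Pi$ with $\mathbb{E}_{\pi^*}[\textit{MHit}]=\inf_{\pi\in\Pi}\mathbb{E}_\pi[\textit{MHit}]$, and for every $n\ge1$ there exists a $\Pi_n$-optimal profile, i.e. $\pi^*\in\Pi_n$ with $\mathbb{E}_{\pi^*}[\textit{MHit}]=\inf_{\pi\in\Pi_n}\mathbb{E}_\pi[\textit{MHit}]$.
   Context: An MDP is a triple $M=(S,\textit{Act},P)$ with finite sets $S$, $\textit{Act}$ and $P:S\times\textit{Act}\times S\to[0,1]$ such that for each $s$ the set $\textit{En}(s)$ of enabled actions (those $a$ with $\sum_t P(s,a,t)=1$) is nonempty. An MSSP instance consists of an MDP $M$, a number $k\ge1$ of agents, and for each agent $i$ an initial state $\iota_i\in S$ and target set $T_i\subseteq S$ with $\iota_i\notin T_i\neq\emptyset$. In the autonomous setting each agent $i$ uses its own strategy $\sigma_i$ in $M$ which depends only on agent $i$'s own history (not on the other agents); the strategy is given by a set $\mathit{Mem}_i$ of memory states, a (randomized) initial memory, a randomized rule choosing an enabled action from the current state and memory state, and a randomized rule updating the memory state; agents evolve independently, agent $i$ starting in $\iota_i$. A tuple $\pi=(\sigma_1,\dots,\sigma_k)$ is an (autonomous) profile; $\Pi$ is the class of all autonomous profiles and, for $n\ge1$, $\Pi_n$ is the class of profiles in which every $\mathit{Mem}_i$ has at most $n$ elements ($\Pi_1$ = memoryless profiles). $\textit{MHit}$ is the first time step at which some agent $i$ is in a state of $T_i$ ($\infty$ if never), and $\mathbb{E}_\pi[\textit{MHit}]$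 is its expectation under $\pi$. *)

(* Defs.v *)
From HB Require Import structures.
From mathcomp Require Import all_boot all_order all_algebra.
From mathcomp Require Import all_classical all_reals all_analysis.
Set Implicit Arguments. Unset Strict Implicit. Unset Printing Implicit Defensive.
Import Order.TTheory GRing.Theory Num.Theory.
Local Open Scope ring_scope.
Local Open Scope classical_set_scope.

Section MSSP.
Variables (R : realType) (S Act : finType).

Definition enabled (P : S -> Act -> S -> R) (s : S) (a : Act) : Prop :=
  \sum_(t : S) P s a t = 1.

Definition is_MDP (P : S -> Act -> S -> R) : Prop :=
  (forall s a t, 0 <= P s a t <= 1) /\ (forall s, exists a, enabled P s a).

(* A (randomized, memory-based) strategy with memory set Mem:
   - init m        : probability that the initial memory state is m
   - act s m a     : probability of choosing action a in state s with memory m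
   - upd m s a s' m' : probability that the memory becomes m' after a step
                       from s with memory m, action a, to successor state s'. *)
Record strategy (Mem : choiceType) := Strategy {
  st_init : Mem -> R;
  st_act : S -> Mem -> Act -> R;
  st_upd : Mem -> S -> Act -> S -> Mem -> R }.

Definition is_distr (T : choiceType) (d : T -> R) : Prop :=
  (forall x, 0 <= d x) /\ (\esum_(x in [set: T]) (d x)%:E = 1%E).

Definition valid_strategy (P : S -> Act -> S -> R) (Mem : choiceType)
    (sg : strategy Mem) : Prop :=
  is_distr (st_init sg) /\
  (forall s m, (forall a, 0 <= st_act sg s m a) /\ \sum_(a : Act) st_act sg s m a = 1
               /\ (forall a, 0 < st_act sg s m a -> enabled P s a)) /\
  (forall m s a s', is_distr (st_upd sg m s a s')).

(* reach P sg iota T t s m = probability that at time t the agent (started in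
   iota, using sg) is in state s with memory m and has not visited T at any
   time step < t. *)
Fixpoint reach (P : S -> Act -> S -> R) (Mem : choiceType) (sg : strategy Mem)
    (iota : S) (T : {set S}) (t : nat) : S -> Mem -> \bar R :=
  match t with
  | 0 => fun s m => if s == iota then (st_init sg m)%:E else 0%E
  | t'.+1 => fun s' m' =>
      (\sum_(s : S | s \notin T) \sum_(a : Act)
         \esum_(m in [set: Mem])
           (reach P sg iota T t' s m *
            (st_act sg s m a * P s a s' * st_upd sg m s a s' m')%:E))%E
  end.

(* Probability that the agent has not visited T at any time <= t,
   i.e. P(Hit > t). *)
Definition survive (P : S -> Act -> S -> R) (Mem : choiceType) (sg : strategy Mem)
    (iota : S) (T : {set S}) (t : nat) : \bar R :=
  (\sum_(s : S | s \notin T) \esum_(m in [set: Mem]) reach P sg iota T t s m)%E.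

(* Expected value of MHit = min_i Hit_i for independently evolving agents:
   E[MHit] = sum_{t>=0} P(MHit > t) = sum_{t>=0} prod_i P(Hit_i > t). *)
Definition EMHit (P : S -> Act -> S -> R) (k : nat) (iota : 'I_k -> S)
    (T : 'I_k -> {set S}) (Mem : 'I_k -> choiceType)
    (pi : forall i, strategy (Mem i)) : \bar R :=
  (\sum_(t <oo) \prod_(i < k) survive P (pi i) (iota i) (T i) t)%E.

Definition values_Pi (P : S -> Act -> S -> R) (k : nat) (iota : 'I_k -> S)
    (T : 'I_k -> {set S}) : set (\bar R) :=
  [set x | exists (Mem : 'I_k -> choiceType) (pi : forall i, strategy (Mem i)),
     (forall i, valid_strategy P (pi i)) /\ x = EMHit P iota T pi].

Definition values_Pin (P : S -> Act -> S -> R) (k : nat) (iota : 'I_k -> S)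
    (T : 'I_k -> {set S}) (n : nat) : set (\bar R) :=
  [set x | exists (Mem : 'I_k -> finType) (pi : forall i, strategy (Mem i)),
     (forall i, #|Mem i| <= n)%N /\
     (forall i, valid_strategy P (pi i)) /\ x = EMHit P iota T pi].

End MSSP.

(* Main.v *)
Require Import Defs.
From HB Require Import structures.
From mathcomp Require Import all_boot all_order all_algebra.
From mathcomp Require Import all_classical all_reals all_analysis.
From mathcomp Require Import zify ring lra.
Set Implicit Arguments. Unset Strict Implicit. Unset Printing Implicit Defensive.
Import Order.TTheory GRing.Theory Num.Theory.
Import numFieldNormedType.Exports.
Local Open Scope ring_scope.
Local Open Scope classical_set_scope.
Section Help.
Variable R : realType.
Local Open Scope ereal_scope.

Lemma esum_single (T : choiceType) (f : T -> \bar R) t0 :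
  (forall t, t != t0 -> f t = 0) -> 0 <= f t0 ->
  \esum_(t in [set: T]) f t = f t0.
Proof.
move=> f0 ft0; rewrite -(esum_set1 ft0) [RHS]esum_mkcond; apply: eq_esum => t _.
case: (eqVneq t t0) => [->|ne]; first by rewrite ifT // inE.
by rewrite ifF ?f0 //; apply/negbTE/negP; rewrite inE /=; exact/eqP.
Qed.

Lemma esum_fin (T : finType) (f : T -> \bar R) : (forall t, 0 <= f t) ->
  \esum_(t in [set: T]) f t = \sum_(t : T) f t.
Proof.
move=> f0.
transitivity (\esum_(t in [set: T]) \sum_(j : T) (if j == t then f j else 0)).
  by apply: eq_esum => t _; rewrite -big_mkcond /= big_pred1_eq.
rewrite esum_sum; last by move=> i j _ _; case: ifP.
apply: eq_bigr => j _; rewrite (esum_single (t0 := j)) ?eqxx //.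
by move=> t; rewrite eq_sym => /negbTE ->.
Qed.

Lemma esumZl (T : choiceType) (D : set T) (r : R) (f : T -> \bar R) :
  (0 <= r)%R -> (forall t, 0 <= f t) ->
  \esum_(t in D) (r%:E * f t) = r%:E * \esum_(t in D) f t.
Proof.
move=> r0 f0; rewrite /esum -ereal_supZl //; last first.
  by apply/set0P; exists (\sum_(x \in set0) f x); exists set0 => //; exact: fsets_set0.
congr ereal_sup; apply/seteqP; split => x.
  by case=> A HA <-; exists (\sum_(i \in A) f i); [exists A|rewrite ge0_mule_fsumr].
by case=> _ [A HA <-] <-; exists A => //; rewrite ge0_mule_fsumr.
Qed.

Lemma esum_swap (T1 T2 : choiceType) (a : T1 -> T2 -> \bar R) :
  (forall i j, 0 <= a i j) ->
  \esum_(i in [set: T1]) \esum_(j in [set: T2]) a i j =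
  \esum_(j in [set: T2]) \esum_(i in [set: T1]) a i j.
Proof.
move=> a0; rewrite !esum_esum //.
rewrite (@reindex_esum R _ _ ([set: T2] `*`` fun=> [set: T1])
   ([set: T1] `*`` fun=> [set: T2]) (fun k => (k.2, k.1))) //.
split.
- by move=> [x y] _.
- by move=> [x y] [x' y'] _ _ /= [-> ->].
- by move=> [x y] _; exists (y, x).
Qed.

End Help.
Section Fin.
Variables (R : realType) (S Act : finType) (P : S -> Act -> S -> R).
Variables (iota : S) (T : {set S}).
Hypothesis P0 : forall s a t, (0 <= P s a t)%R.

Definition nonneg_st (M : choiceType) (sg : strategy R S Act M) :=
  [/\ forall m, (0 <= st_init sg m)%R,
      forall s m a, (0 <= st_act sg s m a)%R &
      forall m s a s' m', (0 <= st_upd sg m s a s' m')%R].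

Lemma valid_nonneg (M : choiceType) (sg : strategy R S Act M) :
  valid_strategy P sg -> nonneg_st sg.
Proof.
case=> [[i0 _] [ha hu]]; split => //.
- by move=> s m a; case: (ha s m) => + _; apply.
- by move=> m s a s' m'; case: (hu m s a s') => + _; apply.
Qed.

Fixpoint rreach (M : finType) (sg : strategy R S Act M) (t : nat) : S -> M -> R :=
  match t with
  | 0 => fun s m => if s == iota then st_init sg m else 0
  | t'.+1 => fun s' m' =>
      \sum_(s : S | s \notin T) \sum_(a : Act) \sum_(m : M)
         rreach sg t' s m * (st_act sg s m a * P s a s' * st_upd sg m s a s' m')
  end.

Definition rsurv (M : finType) (sg : strategy R S Act M) t : R :=
  \sum_(s : S | s \notin T) \sum_(m : M) rreach sg t s m.

Lemma rreach_ge0 (M : finType) (sg : strategy R S Act M) t s m :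
  nonneg_st sg -> 0 <= rreach sg t s m.
Proof.
case=> hi ha hu; elim: t s m => [|t IH] s m /=; first by case: ifP.
apply: sumr_ge0 => s0 _; apply: sumr_ge0 => a _; apply: sumr_ge0 => m0 _.
by rewrite !mulr_ge0.
Qed.

Lemma reach_fin (M : finType) (sg : strategy R S Act M) t s m :
  nonneg_st sg -> reach P sg iota T t s m = (rreach sg t s m)%:E.
Proof.
move=> nn; have [hi ha hu] := nn.
elim: t s m => [|t IH] s m /=; first by case: ifP.
rewrite -sumEFin; apply: eq_bigr => s0 _; rewrite -sumEFin; apply: eq_bigr => a _.
rewrite esum_fin; last by move=> m0; rewrite IH -EFinM lee_fin mulr_ge0 ?rreach_ge0 // !mulr_ge0.
by rewrite -sumEFin; apply: eq_bigr => m0 _; rewrite IH.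
Qed.

Lemma survive_fin (M : finType) (sg : strategy R S Act M) t :
  nonneg_st sg -> survive P sg iota T t = (rsurv sg t)%:E.
Proof.
move=> nn; rewrite /survive /rsurv -sumEFin; apply: eq_bigr => s _.
rewrite esum_fin; last by move=> m; rewrite reach_fin // lee_fin rreach_ge0.
by rewrite -sumEFin; apply: eq_bigr => m _; rewrite reach_fin.
Qed.

Lemma is_distr_fin (M : finType) (d : M -> R) :
  is_distr d <-> (forall x, 0 <= d x) /\ \sum_x d x = 1.
Proof.
split=> -[d0 h]; split => //.
  by move: h; rewrite esum_fin ?sumEFin => [[]|x]; rewrite ?lee_fin.
by rewrite esum_fin ?sumEFin ?h // => x; rewrite lee_fin.
Qed.

End Fin.
Section Transport.
Variables (R : realType) (S Act : finType) (P : S -> Act -> S -> R).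
Variables (iota : S) (T : {set S}).
Hypothesis P0 : forall s a t, (0 <= P s a t)%R.
Hypothesis hen : forall s, exists a, enabled P s a.

Definition a0 (s : S) : Act :=
  xchoose (let: ex_intro a h := hen s in
           ex_intro (fun a => \sum_(t : S) P s a t == 1) a (introT eqP h)).

Lemma a0_en s : enabled P s (a0 s).
Proof. exact/eqP/(xchooseP (P := fun a => \sum_(t : S) P s a t == 1)). Qed.

Definition dflt (s : S) (a : Act) : R := if a == a0 s then 1 else 0.

Lemma dflt_ok s : (forall a, 0 <= dflt s a) /\ \sum_a dflt s a = 1 /\
  (forall a, 0 < dflt s a -> enabled P s a).
Proof.
split; first by move=> a; rewrite /dflt; case: ifP.
split; first by rewrite /dflt -big_mkcond /= big_pred1_eq.
by move=> a; rewrite /dflt; case: eqP => [->|]; rewrite ?ltxx // => _; exact: a0_en.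
Qed.

Section Inj.
Variables (M : finType) (n : nat) (f : M -> 'I_n).
Hypothesis finj : injective f.

Definition ginv (j : 'I_n) : option M := [pick m | f m == j].

Lemma ginvP j : (forall m, ginv j = Some m <-> f m = j).
Proof.
move=> m; rewrite /ginv; case: pickP => [m' /eqP fm'|none]; split.
- by case=> <-.
- by move=> fm; congr Some; apply: finj; rewrite fm'.
- by [].
- by move=> fm; have := none m; rewrite fm eqxx.
Qed.

Lemma sum_ginv (F : M -> R) :
  \sum_(j : 'I_n) oapp F 0 (ginv j) = \sum_(m : M) F m.
Proof.
transitivity (\sum_(j : 'I_n) \sum_(m : M | f m == j) F m).
  apply: eq_bigr => j _; case E: (ginv j) => [m|] /=.
    rewrite (big_pred1 m) // => m'; apply/eqP/eqP.
      by move=> fm'; apply: finj; rewrite fm'; apply/esym/ginvP.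
    by move=> ->; apply/ginvP.
  rewrite big_pred0 // => m'; apply/negP => /eqP fm.
  by have := proj2 (ginvP j m') fm; rewrite E.
rewrite (exchange_big_dep xpredT) //=.
by apply: eq_bigr => m _; rewrite (big_pred1 (f m)) // => j; rewrite eq_sym.
Qed.

Variable sg : strategy R S Act M.

Definition tr : strategy R S Act 'I_n := Strategy
  (fun j => oapp (st_init sg) 0 (ginv j))
  (fun s j a => oapp (fun m => st_act sg s m a) (dflt s a) (ginv j))
  (fun j s a s' j' => match ginv j with
     | Some m => oapp (st_upd sg m s a s') 0 (ginv j')
     | None => if j' == j then 1 else 0 end).

Lemma tr_rreach t s j : rreach P iota T tr t s j = oapp (rreach P iota T sg t s) 0 (ginv j).
Proof.
elim: t s j => [|t IH] s' j' /=.
  by case: (ginv j') => [m|] /=; case: ifP.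
have step s a : \sum_(j : 'I_n) rreach P iota T tr t s j *
     (st_act tr s j a * P s a s' * st_upd tr j s a s' j') =
   \sum_(m : M) rreach P iota T sg t s m * (st_act sg s m a * P s a s' *
     oapp (st_upd sg m s a s') 0 (ginv j')).
  rewrite -sum_ginv; apply: eq_bigr => j _; rewrite IH /=.
  by case: (ginv j) => [m|] /=; rewrite ?mul0r.
under eq_bigr do under eq_bigr do rewrite step.
case E: (ginv j') => [m'|] //=.
rewrite big1 // => s _; rewrite big1 // => a _; rewrite big1 // => m _.
by rewrite /= !mulr0.
Qed.

Lemma tr_rsurv t : rsurv P iota T tr t = rsurv P iota T sg t.
Proof.
rewrite /rsurv; apply: eq_bigr => s _.
by under eq_bigr do rewrite tr_rreach; rewrite sum_ginv.
Qed.

Lemma tr_valid : valid_strategy P sg -> valid_strategy P tr.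
Proof.
case=> [/is_distr_fin [i0 i1] [ha hu]]; split; last split.
- apply/is_distr_fin; split; last by rewrite sum_ginv.
  by move=> j /=; case: (ginv j) => /=.
- move=> s j /=; case: (ginv j) => [m|] /=; first exact: ha.
  exact: dflt_ok.
- move=> j s a s' /=; apply/is_distr_fin; case: (ginv j) => [m|] /=.
    have /is_distr_fin [u0 u1] := hu m s a s'.
    split; last by rewrite sum_ginv.
    by move=> j'; case: (ginv j') => /=.
  split; first by move=> j'; case: ifP.
  by rewrite -big_mkcond /= big_pred1_eq.
Qed.

End Inj.
End Transport.
Section Topo.
Variables (R : realType) (X : topologicalType).

Lemma cont_cst (c : R) : continuous (fun _ : X => c).
Proof. by move=> x; exact: cvg_cst. Qed.

Lemma cont_add (f g : X -> R) : continuous f -> continuous g ->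
  continuous (fun x => f x + g x).
Proof. by move=> cf cg x; exact: (@continuousD _ R^o _ _ _ x (cf x) (cg x)). Qed.

Lemma cont_mul (f g : X -> R) : continuous f -> continuous g ->
  continuous (fun x => f x * g x).
Proof. by move=> cf cg x; exact: (@continuousM R X f g x (cf x) (cg x)). Qed.

Lemma cont_bigsum (J : Type) (r : seq J) (Pj : pred J) (F : J -> X -> R) :
  (forall j, continuous (F j)) ->
  continuous (fun x => \sum_(j <- r | Pj j) F j x).
Proof.
move=> cF; elim: r => [|j r IH].
  by under eq_fun do rewrite big_nil; exact: cont_cst.
under eq_fun do rewrite big_cons.
case: (Pj j); last exact: IH.
exact: cont_add.
Qed.

Lemma cont_bigprod (J : Type) (r : seq J) (Pj : pred J) (F : J -> X -> R) :
  (forall j, continuous (F j)) ->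
  continuous (fun x => \prod_(j <- r | Pj j) F j x).
Proof.
move=> cF; elim: r => [|j r IH].
  by under eq_fun do rewrite big_nil; exact: cont_cst.
under eq_fun do rewrite big_cons.
case: (Pj j); last exact: IH.
exact: cont_mul.
Qed.

Lemma closed_pre (f : X -> R) (A : set R) : continuous f -> closed A ->
  closed [set x | A (f x)].
Proof. by move=> cf cA; exact: (proj1 (continuous_closedP f) cf A cA). Qed.

Lemma closed_all (J : Type) (Q : J -> set X) : (forall j, closed (Q j)) ->
  closed [set x | forall j, Q j x].
Proof.
move=> cQ; have -> : [set x | forall j, Q j x] = \bigcap_(j in [set: J]) Q j.
  by apply/seteqP; split => x /= h j; [move=> _|]; exact: h.
by apply: closed_bigI => j _; exact: cQ.
Qed.

Lemma closed_imp (Pr : Prop) (A : set X) : closed A -> closed [set x | Pr -> A x].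
Proof.
move=> cA; have [p|np] := pselect Pr.
  have -> : [set x | Pr -> A x] = A by apply/seteqP; split => x /= h; [exact: h|].
  exact: cA.
have -> : [set x | Pr -> A x] = setT by apply/seteqP; split => x //= _.
exact: closedT.
Qed.

Lemma closed_and (A B : set X) : closed A -> closed B -> closed [set x | A x /\ B x].
Proof. exact: closedI. Qed.

End Topo.
Section Part2.
Variables (R : realType) (S Act : finType) (P : S -> Act -> S -> R).
Variables (k : nat) (iota : 'I_k -> S) (T : 'I_k -> {set S}) (n : nat).

Definition validF (M : finType) (sg : strategy R S Act M) : Prop :=
  ((forall m, 0 <= st_init sg m) /\ \sum_m st_init sg m = 1) /\
  (forall s m, (forall a, 0 <= st_act sg s m a) /\ (\sum_a st_act sg s m a = 1 /\
     forall a, ~ enabled P s a -> st_act sg s m a = 0)) /\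
  (forall m s a s', (forall m', 0 <= st_upd sg m s a s' m') /\
     \sum_m' st_upd sg m s a s' m' = 1).

Lemma validF_iff (M : finType) (sg : strategy R S Act M) :
  valid_strategy P sg <-> validF sg.
Proof.
split.
- case=> [/is_distr_fin hi [ha hu]]; split => //; split.
    move=> s m; have [a0 [a1 a2]] := ha s m; split => //; split => // a na.
    apply/eqP; rewrite eq_le a0 andbT leNgt; apply/negP => /a2; exact: na.
  by move=> m s a s'; apply/is_distr_fin.
- case=> [hi [ha hu]]; split; first exact/is_distr_fin.
  split; last by move=> m s a s'; apply/is_distr_fin.
  move=> s m; have [a0 [a1 a2]] := ha s m; split => //; split => // a pa.
  have [//|na] := pselect (enabled P s a).
  by move: pa; rewrite a2 // ltxx.
Qed.

Definition I2 := ('I_k * ('I_n + (S * 'I_n * Act) + ('I_n * S * Act * S * 'I_n)))%type.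
Definition X2 := prod_topology (fun _ : I2 => R).

Definition strat2 (x : X2) (i : 'I_k) : strategy R S Act 'I_n := Strategy
  (fun m => x (i, inl (inl m)))
  (fun s m a => x (i, inl (inr (s, m, a))))
  (fun m s a s' m' => x (i, inr (m, s, a, s', m'))).

Definition K2 : set X2 := [set x | forall i, validF (strat2 x i)].

Lemma cont_proj2 (j : I2) : continuous (fun x : X2 => x j).
Proof. exact: (@proj_continuous I2 (fun _ => R) j). Qed.

Lemma closed_K2 : closed K2.
Proof.
apply: closed_all => i; apply: closed_and; [apply: closed_and|apply: closed_and].
- apply: closed_all => m; apply: (closed_pre (A := [set y | 0 <= y])).
    exact: cont_proj2.
  exact: closed_ge.
- apply: (closed_pre (A := [set y | y = 1])); last exact: closed_eq.
  by apply: cont_bigsum => m; exact: cont_proj2.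
- apply: closed_all => s; apply: closed_all => m; apply: closed_and.
    apply: closed_all => a; apply: (closed_pre (A := [set y | 0 <= y])).
      exact: cont_proj2.
    exact: closed_ge.
  apply: closed_and.
    apply: (closed_pre (A := [set y | y = 1])); last exact: closed_eq.
    by apply: cont_bigsum => a; exact: cont_proj2.
  apply: closed_all => a; apply: closed_imp.
  apply: (closed_pre (A := [set y | y = 0])); last exact: closed_eq.
  exact: cont_proj2.
- apply: closed_all => m; apply: closed_all => s; apply: closed_all => a.
  apply: closed_all => s'; apply: closed_and.
    apply: closed_all => m'; apply: (closed_pre (A := [set y | 0 <= y])).
      exact: cont_proj2.
    exact: closed_ge.
  apply: (closed_pre (A := [set y | y = 1])); last exact: closed_eq.
  by apply: cont_bigsum => m'; exact: cont_proj2.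
Qed.

Lemma le_sum1 (J : finType) (F : J -> R) j0 :
  (forall j, 0 <= F j) -> \sum_j F j = 1 -> 0 <= F j0 <= 1.
Proof.
move=> F0 F1; rewrite F0 /= -F1 (bigD1 j0) //= lerDl.
by apply: sumr_ge0 => j _.
Qed.

Lemma K2_box : K2 `<=` [set x : X2 | forall j, `[(0:R), 1]%classic (x j)].
Proof.
move=> x Kx [i c] /=; rewrite in_itv /=.
have [[i0 i1] [ha hu]] := Kx i.
case: c => [[m|[[s m] a]]|[[[[m s] a] s'] m']].
- exact: (le_sum1 (F := fun m => x (i, inl (inl m))) m i0 i1).
- have [a0 [a1 _]] := ha s m.
  exact: (le_sum1 (F := fun a => x (i, inl (inr (s, m, a)))) a a0 a1).
- have [u0 u1] := hu m s a s'.
  exact: (le_sum1 (F := fun m' => x (i, inr (m, s, a, s', m'))) m' u0 u1).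
Qed.

Lemma compact_K2 : compact K2.
Proof.
apply: (subclosed_compact closed_K2 _ K2_box).
exact: (@tychonoff I2 (fun _ => R) (fun _ => `[(0:R), 1]%classic)
  (fun _ => @segment_compact R 0 1)).
Qed.

Lemma cont_rreach2 i t s m :
  continuous (fun x : X2 => rreach P (iota i) (T i) (strat2 x i) t s m).
Proof.
move: s m; elim: t => [|t IH] s m /=.
  by case: (s == iota i); [exact: cont_proj2|exact: cont_cst].
apply: cont_bigsum => s0; apply: cont_bigsum => a; apply: cont_bigsum => m0.
apply: cont_mul; first exact: IH.
apply: cont_mul; last exact: cont_proj2.
by apply: cont_mul; [exact: cont_proj2|exact: cont_cst].
Qed.

Definition g2 (t : nat) (x : X2) : R :=
  \prod_(i < k) rsurv P (iota i) (T i) (strat2 x i) t.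

Lemma cont_g2 t : continuous (g2 t).
Proof.
apply: cont_bigprod => i; apply: cont_bigsum => s; apply: cont_bigsum => m.
exact: cont_rreach2.
Qed.

End Part2.
Section Abs.
Variable R : realType.
Local Open Scope ereal_scope.

Definition Vser (X : Type) (g : nat -> X -> R) (x : X) : \bar R :=
  \sum_(t <oo) (g t x)%:E.

Lemma cont_sum (X : topologicalType) (g : nat -> X -> R) N :
  (forall t, continuous (g t)) -> continuous (fun x => (\sum_(t < N) g t x)%R).
Proof.
move=> gc x; elim: N => [|N IH].
  under eq_fun do rewrite big_ord0. exact: cvg_cst.
under eq_fun do rewrite big_ord_recr /=.
exact: (@continuousD _ R^o _ _ _ x IH (gc N x)).
Qed.

Lemma min_exists (X : topologicalType) (K : set X) (g : nat -> X -> R) :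
  compact K -> K !=set0 -> (forall t, continuous (g t)) ->
  (forall t x, K x -> (0 <= g t x)%R) ->
  exists2 x, K x & forall z, K z -> Vser g x <= Vser g z.
Proof.
move=> Kc [x0 Kx0] gc g0.
have V0 z : K z -> 0 <= Vser g z.
  by move=> Kz; apply: nneseries_ge0 => n _ _; rewrite lee_fin g0.
have part z N : K z -> (\sum_(t < N) g t z)%:E <= Vser g z.
  move=> Kz; rewrite -sumEFin -(big_mkord xpredT (fun t => (g t z)%:E)).
  by apply: nneseries_lim_ge => n _ _; rewrite lee_fin g0.
set c := ereal_inf (Vser g @` K).
have c0 : 0 <= c by apply: le_ereal_inf_tmp => _ [z Kz <-]; exact: V0.
have lbc z : K z -> c <= Vser g z by move=> Kz; apply: ereal_inf_lbound; exists z.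
have [cy|cny] := eqVneq c +oo.
  exists x0 => // z Kz; have := lbc z Kz; rewrite cy leye_eq => /eqP ->.
  exact: leey.
have cfin : c \is a fin_num by rewrite ge0_fin_numE // ltey.
set r := fine c.
have rc : c = r%:E by rewrite fineK.
pose B (j : nat) := [set x | K x /\ Vser g x <= (r + (j.+1%:R)^-1)%:E].
have Bne j : B j !=set0.
  have [_ [z Kz <-] lt] := @lb_ereal_inf_adherent R (Vser g @` K) (j.+1%:R)^-1
    ltac:(by rewrite invr_gt0) cfin.
  exists z; split => //; rewrite EFinD -rc; exact: ltW.
have Bdec i j : (i <= j)%N -> B j `<=` B i.
  move=> ij z [Kz Vz]; split => //; apply: (le_trans Vz).
  rewrite lee_fin lerD2l lef_pV2 ?posrE ?ltr0n // ler_nat; lia.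
have FF : ProperFilter (filter_from setT B).
  apply: filter_from_proper; last by move=> j _; exact: Bne.
  apply: filter_fromT_filter; first by exists 0%N.
  move=> i j; exists (maxn i j) => z Bz; split.
    by apply: (Bdec i (maxn i j)) => //; exact: leq_maxl.
  by apply: (Bdec j (maxn i j)) => //; exact: leq_maxr.
have FK : filter_from setT B K by exists 0%N => // z [].
have [p [Kp clp]] := Kc _ FF FK.
exists p => // z Kz; apply: le_trans (lbc z Kz); rewrite rc.
rewrite /Vser.
have nd : nondecreasing_seq (fun n => \sum_(0 <= t < n) (g t p)%:E).
  by apply: (@ereal_nondecreasing_series R _ xpredT 0%N) => n _ _; rewrite lee_fin g0.
have := @ereal_nondecreasing_cvgn R _ nd.
move=> /cvg_lim => ->//.
apply: ge_ereal_sup => _ [N _ <-]; rewrite big_mkord sumEFin lee_fin.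
rewrite leNgt; apply/negP => ltN.
set SN := fun x => (\sum_(t < N) g t x)%R.
pose e := ((SN p - r) / 2)%R.
have e0 : (0 < e)%R by rewrite divr_gt0 // subr_gt0.
have nb : \forall x \near p, (r + e < SN x)%R.
  apply: (@cvgr_gt _ _ _ _ SN (SN p)); first exact: cont_sum.
  rewrite /e -subr_gt0; set d := (SN p - r)%R.
  have -> : (SN p - (r + d / 2) = d / 2)%R by rewrite /d; field.
  by rewrite divr_gt0 // subr_gt0.
have [j jlt] : exists j : nat, ((j.+1%:R)^-1 < e)%R.
  exists (Num.truncn (e^-1)).
  rewrite invf_plt ?posrE ?ltr0n //; exact: truncnS_gt.
have [y [[Ky Vy] ly]] := clp (B j) _ (ex_intro2 _ _ j I (fun _ h => h)) nb.
have := le_trans (part y N Ky) Vy; rewrite lee_fin => h.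
have := lt_le_trans ly h; rewrite ltrD2l => /(lt_trans jlt).
by rewrite ltxx.
Qed.
End Abs.
Section Part2Main.
Variables (R : realType) (S Act : finType) (P : S -> Act -> S -> R).
Variables (k : nat) (iota : 'I_k -> S) (T : 'I_k -> {set S}) (n : nat).
Hypothesis hMDP : is_MDP P.
Hypothesis n0 : (0 < n)%N.

Let P0 s a t : 0 <= P s a t. Proof. by case: hMDP => /(_ s a t) /andP[]. Qed.
Let hen : forall s, exists a, enabled P s a. Proof. by case: hMDP. Qed.

Definition fM (M : finType) (h : (#|M| <= n)%N) : M -> 'I_n :=
  fun m => widen_ord h (enum_rank m).

Lemma fM_inj M h : injective (@fM M h).
Proof. by move=> a b /(congr1 val) /= /val_inj /enum_rank_inj. Qed.

Section Emb.
Variables (Mem : 'I_k -> finType) (pi : forall i, strategy R S Act (Mem i)).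
Hypothesis hle : forall i, (#|Mem i| <= n)%N.

Definition trs i := tr hen (fM (hle i)) (pi i).

Definition embed : X2 R S Act k n := fun j =>
  match j with
  | (i, inl (inl m)) => st_init (trs i) m
  | (i, inl (inr (s, m, a))) => st_act (trs i) s m a
  | (i, inr (m, s, a, s', m')) => st_upd (trs i) m s a s' m'
  end.

Lemma strat2_embed i : strat2 embed i = trs i.
Proof. by []. Qed.

Hypothesis hv : forall i, valid_strategy P (pi i).

Lemma embed_K2 : K2 P embed.
Proof. by move=> i; apply/validF_iff; rewrite strat2_embed; apply: tr_valid => //; exact: fM_inj. Qed.

Lemma embed_val : EMHit P iota T pi = Vser (g2 P iota T (n:=n)) embed.
Proof.
rewrite /EMHit /Vser; apply: eq_eseriesr => t _; rewrite /g2 -prodEFin.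
apply: eq_bigr => i _; rewrite strat2_embed tr_rsurv; last exact: fM_inj.
by rewrite survive_fin //; apply: valid_nonneg.
Qed.
End Emb.

Lemma part2 : exists (Mem : 'I_k -> finType) (pi : forall i, strategy R S Act (Mem i)),
       (forall i, #|Mem i| <= n)%N /\
       (forall i, valid_strategy P (pi i)) /\
       EMHit P iota T pi = ereal_inf (values_Pin P iota T n).
Proof.
pose pi0 (i : 'I_k) : strategy R S Act unit :=
  Strategy (fun _ => 1) (fun s _ a => dflt hen s a) (fun _ _ _ _ _ => 1).
have sum1 : \sum_(m : unit) (1 : R) = 1 by rewrite (big_pred1 tt) // => -[].
have v0 i : valid_strategy P (pi0 i).
  split; first by apply/is_distr_fin; split.
  split; first by move=> s m; exact: dflt_ok.
  by move=> m s a s'; apply/is_distr_fin; split.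
have hle0 (i : 'I_k) : (#|{: unit}| <= n)%N by rewrite card_unit.
have ne : K2 P (k := k) (n := n) !=set0 by exists (@embed (fun=> unit) pi0 hle0); exact: embed_K2.
have g0 t x : K2 P x -> 0 <= g2 P iota T (n:=n) t x.
  move=> Kx; apply: prodr_ge0 => i _; apply: sumr_ge0 => s _; apply: sumr_ge0 => m _.
  by apply: rreach_ge0 => //; apply: valid_nonneg; apply/validF_iff; exact: Kx.
have [x Kx xmin] := min_exists (@compact_K2 R S Act P k n) ne (@cont_g2 R S Act P k iota T n) g0.
have vx i : valid_strategy P (strat2 x i) by apply/validF_iff; exact: Kx.
have EV : EMHit P iota T (strat2 x) = Vser (g2 P iota T (n:=n)) x.
  rewrite /EMHit /Vser; apply: eq_eseriesr => t _; rewrite /g2 -prodEFin.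
  by apply: eq_bigr => i _; rewrite survive_fin //; apply: valid_nonneg.
exists (fun _ => 'I_n), (strat2 x); split; first by move=> i; rewrite card_ord.
split => //; rewrite EV; apply/eqP; rewrite eq_le; apply/andP; split.
  apply: le_ereal_inf_tmp => _ [Mem [pi [hle [hv ->]]]].
  rewrite (embed_val hle hv); apply: xmin; exact: embed_K2.
apply: ereal_inf_lbound; exists (fun _ => 'I_n), (strat2 x).
by split; [move=> i; rewrite card_ord|split].
Qed.
End Part2Main.
Section Help1.
Variable R : realType.
Variable S : finType.
Local Open Scope ereal_scope.

Lemma big_tuple_cons (V : Type) (idx : V) (op : Monoid.com_law idx) n
    (F : (n.+1).-tuple S -> V) :
  \big[op/idx]_(w : (n.+1).-tuple S) F w =
  \big[op/idx]_(s : S) \big[op/idx]_(w : n.-tuple S) F [tuple of s :: w].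
Proof.
rewrite pair_big /=.
rewrite (reindex (fun p : S * n.-tuple S => [tuple of p.1 :: p.2])) /=; last first.
  exists (fun w : (n.+1).-tuple S => (thead w, [tuple of behead w])).
    by move=> [s w] _ /=; congr pair; apply: val_inj.
  move=> w _; apply: val_inj => /=.
  by case: w => -[|x r] //= _; rewrite /thead (tnth_nth x) /=.
by [].
Qed.

Lemma head_exchange (V : Type) (idx : V) (op : Monoid.com_law idx) n
    (x0 : S) (T : {set S}) (F : seq S -> V) :
  \big[op/idx]_(s : S | s \notin T) \big[op/idx]_(w : n.-tuple S | head x0 w == s) F w =
  \big[op/idx]_(w : n.-tuple S | head x0 w \notin T) F w.
Proof.
rewrite (exchange_big_dep xpredT) //= [RHS]big_mkcond /=.
apply: eq_bigr => w _; case: (boolP (head x0 w \in T)) => hT /=.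
  rewrite big_pred0 // => s; apply/negP => /andP[sT /eqP hs].
  by move: sT; rewrite -hs hT.
rewrite (big_pred1 (head x0 w)) // => s /=; apply/andP/eqP.
  by case=> _ /eqP.
by move=> ->; rewrite hT.
Qed.

Lemma esum_tuple (n : nat) (F : seq S -> \bar R) : (forall m, 0 <= F m) ->
  \esum_(m in [set: seq S]) (if size m == n then F m else 0) =
  \sum_(w : n.-tuple S) F w.
Proof.
move=> F0.
transitivity (\esum_(m in [set m : seq S | size m == n]) F m).
  rewrite [RHS]esum_mkcond; apply: eq_esum => m _.
  by case: (boolP (size m == n)) => h; [rewrite mem_set|rewrite memNset //= (negbTE h)].
have -> : [set m : seq S | size m == n] = (fun w : n.-tuple S => val w) @` setT.
  apply/seteqP; split => m /=.
    by move=> /eqP h; exists (Tuple (introT eqP h)).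
  by case=> w _ <-; rewrite size_tuple.
rewrite esum_image; last by move=> a b _ _; exact: val_inj.
by rewrite esum_fin.
Qed.

Lemma esum_scale1 (M : choiceType) (X : \bar R) (f : M -> \bar R) :
  (forall t, 0 <= f t) -> \esum_(t in [set: M]) f t = 1 -> 0 <= X ->
  \esum_(t in [set: M]) (X * f t) = X.
Proof.
move=> f0 f1; case: X => [r| |] X0 //.
  rewrite esumZl ?f1 ?mule1 //; by rewrite -lee_fin.
have [t ft] : exists t, 0 < f t.
  apply: contrapT => h; move: f1; rewrite esum1.
    by move=> /eqP; rewrite eq_sym onee_eq0.
  move=> t _; apply/eqP; rewrite eq_le f0 andbT leNgt; apply/negP => ft.
  by apply: h; exists t.
apply/eqP; rewrite eq_le leey /=; apply: esum_ge.
exists [set t]; first by split; [exact: finite_set1|].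
by rewrite fsbig_set1 gt0_mulye.
Qed.

End Help1.
Section KDef.
Variables (R : realType) (S Act : finType) (P : S -> Act -> S -> R).
Variables (iota : S) (T : {set S}).

Definition Kc (y : seq S -> Act -> R) : Prop :=
 (forall s, \sum_a y [:: s] a = if s == iota then 1 else 0) /\
 (forall s' h, h != [::] -> \sum_a y (s' :: h) a =
    if head iota h \notin T then \sum_a y h a * P (head iota h) a s' else 0) /\
 (forall h a, ~ enabled P (head iota h) a -> y h a = 0) /\
 (forall h a, 0 <= y h a /\ y h a <= 1).

Definition Gt (t : nat) (y : seq S -> Act -> R) : R :=
  \sum_(w : (t.+1).-tuple S | head iota w \notin T) \sum_a y w a.
End KDef.

Section Hist.
Variables (R : realType) (S Act : finType) (P : S -> Act -> S -> R).
Variables (iota : S) (T : {set S}).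
Hypothesis P0 : forall s a t, (0 <= P s a t)%R.
Hypothesis P1 : forall s a t, (P s a t <= 1)%R.
Variables (M : choiceType) (sg : strategy R S Act M).
Hypothesis hv : valid_strategy P sg.
Local Open Scope ereal_scope.

Let hi : forall m, (0 <= st_init sg m)%R. Proof. by case: (valid_nonneg hv). Qed.
Let ha : forall s m a, (0 <= st_act sg s m a)%R. Proof. by case: (valid_nonneg hv). Qed.
Let hu : forall m s a s' m', (0 <= st_upd sg m s a s' m')%R. Proof. by case: (valid_nonneg hv). Qed.
Let hasum s m : (\sum_a st_act sg s m a = 1)%R. Proof. by case: hv => _ [/(_ s m) [_ []]]. Qed.

Fixpoint mu (t : nat) : seq S -> M -> \bar R :=
  match t with
  | 0 => fun h m => if h == [:: iota] then (st_init sg m)%:E else 0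
  | t'.+1 => fun h m' => match h with
     | [::] => 0
     | s' :: h0 => if head iota h0 \notin T then
          \sum_(a : Act) \esum_(m in [set: M]) (mu t' h0 m *
             (st_act sg (head iota h0) m a * P (head iota h0) a s' *
              st_upd sg m (head iota h0) a s' m')%:E)
          else 0
     end
  end.

Lemma mu_ge0 t h m : 0 <= mu t h m.
Proof.
elim: t h m => [|t IH] h m /=; first by case: ifP; rewrite ?lee_fin.
case: h => [|s' h] //; case: ifP => // _.
apply: sume_ge0 => a _; apply: esum_ge0 => m0 _.
by apply: mule_ge0 => //; rewrite lee_fin !mulr_ge0.
Qed.

Lemma big_tuple0 (V : Type) (idx : V) (op : Monoid.com_law idx) (F : 0.-tuple S -> V) :
  \big[op/idx]_(w : 0.-tuple S) F w = F [tuple].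
Proof.
rewrite (big_pred1 [tuple]) // => w /=; apply/esym/eqP/val_inj.
by case: w => -[].
Qed.

Lemma reach_mu t s m : reach P sg iota T t s m =
  \sum_(w : (t.+1).-tuple S | head iota w == s) mu t w m.
Proof.
elim: t s m => [|t IH] s' m'.
  rewrite big_mkcond big_tuple_cons /=.
  under eq_bigr do rewrite big_tuple0 /=.
  rewrite -big_mkcond /= big_pred1_eq /= eqseq_cons andbT.
  by case: ifP.
have E1 s a : \esum_(m in [set: M]) (reach P sg iota T t s m *
      (st_act sg s m a * P s a s' * st_upd sg m s a s' m')%:E) =
    \sum_(w : (t.+1).-tuple S | head iota w == s) \esum_(m in [set: M])
      (mu t w m * (st_act sg s m a * P s a s' * st_upd sg m s a s' m')%:E).
  transitivity (\esum_(m in [set: M]) \sum_(w : (t.+1).-tuple S | head iota w == s)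
      (mu t w m * (st_act sg s m a * P s a s' * st_upd sg m s a s' m')%:E)).
    apply: eq_esum => m _; rewrite IH ge0_sume_distrl // => w _; exact: mu_ge0.
  rewrite esum_sum // => m w _ _; apply: mule_ge0; first exact: mu_ge0.
  by rewrite lee_fin !mulr_ge0.
rewrite /=; under eq_bigr do under eq_bigr do rewrite E1.
under eq_bigr do rewrite exchange_big /=.
have E2 s : \sum_(w : (t.+1).-tuple S | head iota w == s) \sum_a \esum_(m in [set: M])
      (mu t w m * (st_act sg s m a * P s a s' * st_upd sg m s a s' m')%:E) =
    \sum_(w : (t.+1).-tuple S | head iota w == s) \sum_a \esum_(m in [set: M])
      (mu t w m * (st_act sg (head iota w) m a * P (head iota w) a s' *
         st_upd sg m (head iota w) a s' m')%:E).
  by apply: eq_bigr => w /eqP ->.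
under eq_bigr do rewrite E2.
rewrite (@head_exchange S _ _ _ _ iota T (fun w : seq S => \sum_a \esum_(m in [set: M])
      (mu t w m * (st_act sg (head iota w) m a * P (head iota w) a s' *
         st_upd sg m (head iota w) a s' m')%:E))).
have R1 : \sum_(w' : (t.+2).-tuple S | head iota w' == s') mu t.+1 w' m' =
    \sum_(w : (t.+1).-tuple S) mu t.+1 (s' :: w) m'.
  rewrite big_mkcond big_tuple_cons /= (bigD1 s') //= eqxx.
  rewrite [X in (_ + X)%E]big1 ?adde0 // => s /negbTE ->.
  by rewrite big1.
by rewrite R1 /= -big_mkcond /=.
Qed.

Definition Qe t h := \esum_(m in [set: M]) mu t h m.
Definition Ye t h a := \esum_(m in [set: M]) (mu t h m * (st_act sg (head iota h) m a)%:E).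

Lemma Qe_ge0 t h : 0 <= Qe t h.
Proof. by apply: esum_ge0 => m _; exact: mu_ge0. Qed.

Lemma Ye_ge0 t h a : 0 <= Ye t h a.
Proof. by apply: esum_ge0 => m _; apply: mule_ge0; rewrite ?lee_fin ?mu_ge0. Qed.

Lemma Qe_sum t h : \sum_a Ye t h a = Qe t h.
Proof.
rewrite /Ye -esum_sum; last by move=> m a _ _; apply: mule_ge0; rewrite ?lee_fin ?mu_ge0.
apply: eq_esum => m _; rewrite -ge0_sume_distrr; last by move=> a _; rewrite lee_fin.
by rewrite sumEFin hasum mule1.
Qed.

Lemma Qe_step t s' h : Qe t.+1 (s' :: h) =
  if head iota h \notin T then \sum_a Ye t h a * (P (head iota h) a s')%:E else 0.
Proof.
rewrite /Qe /=; case: ifP => _; last by rewrite esum1.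
rewrite esum_sum; last first.
  move=> m a _ _; apply: esum_ge0 => m0 _; apply: mule_ge0; first exact: mu_ge0.
  by rewrite lee_fin !mulr_ge0.
apply: eq_bigr => a _; rewrite esum_swap; last first.
  move=> m m0; apply: mule_ge0; first exact: mu_ge0.
  by rewrite lee_fin !mulr_ge0.
set s := head iota h.
transitivity (\esum_(m in [set: M]) (mu t h m * (st_act sg s m a * P s a s')%:E)).
  apply: eq_esum => m _.
  under eq_esum do rewrite EFinM muleA.
  apply: esum_scale1.
  - by move=> m0; rewrite lee_fin.
  - by case: hv => _ [_ /(_ m s a s') []].
  - by apply: mule_ge0; rewrite ?lee_fin ?mulr_ge0 ?mu_ge0.
rewrite /Ye muleC -esumZl //; last by move=> m; apply: mule_ge0; rewrite ?lee_fin ?mu_ge0.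
apply: eq_esum => m _; rewrite EFinM.
by rewrite muleA [LHS]muleC.
Qed.

Lemma Qe0 s : Qe 0 [:: s] = if s == iota then 1 else 0.
Proof.
rewrite /Qe /= eqseq_cons andbT; case: (s == iota); last by rewrite esum1.
by case: hv => [[_ ->] _].
Qed.

Lemma Qe_le1 t h : Qe t h <= 1.
Proof.
elim: t h => [|t IH] h.
  rewrite /Qe /=; case: (h == [:: iota]); first by case: hv => [[_ ->] _].
  by rewrite esum1.
case: h => [|s' h]; first by rewrite /Qe /= esum1.
rewrite Qe_step; case: ifP => // _.
apply: le_trans (IH h); rewrite -Qe_sum; apply: lee_sum => a _.
rewrite -[leRHS]mule1; apply: lee_wpmul2l; first exact: Ye_ge0.
by rewrite lee_fin.
Qed.

Lemma Ye_le t h a : Ye t h a <= Qe t h.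
Proof.
apply: le_esum => m _; rewrite -[leRHS]mule1; apply: lee_wpmul2l; first exact: mu_ge0.
rewrite lee_fin; have := hasum (head iota h) m.
move=> h1; have := le_sum1 (F := fun a => st_act sg (head iota h) m a) a (ha _ _) h1.
by case/andP.
Qed.

Definition ysg (h : seq S) (a : Act) : R := fine (Ye (size h).-1 h a).

Lemma ysgE h a : (ysg h a)%:E = Ye (size h).-1 h a.
Proof.
rewrite fineK // ge0_fin_numE ?Ye_ge0 //.
by apply: le_lt_trans (le_trans (Ye_le _ _ _) (Qe_le1 _ _)) _; rewrite ltry.
Qed.

Lemma ysg_K : Kc P iota T ysg.
Proof.
split; [|split; [|split]].
- move=> s; apply: EFin_inj; rewrite -sumEFin.
  under eq_bigr do rewrite ysgE /=.
  by rewrite Qe_sum Qe0; case: ifP.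
- move=> s' h hn; apply: EFin_inj; rewrite -sumEFin.
  under eq_bigr do rewrite ysgE /=.
  have hs : size h = (size h).-1.+1 by case: h hn.
  rewrite Qe_sum {1}hs Qe_step; case: ifP => // _.
  rewrite -sumEFin; apply: eq_bigr => a _; by rewrite EFinM ysgE.
- move=> h a na; rewrite /ysg /Ye esum1 // => m _.
  have -> : st_act sg (head iota h) m a = 0%R.
    apply/eqP; rewrite eq_le ha andbT leNgt; apply/negP => pa.
    by apply: na; case: hv => _ [/(_ (head iota h) m) [_ [_ hen2]] _]; exact: hen2 pa.
  by rewrite mule0.
- move=> h a; split; first by apply: fine_ge0; exact: Ye_ge0.
  by rewrite -lee_fin ysgE; apply: le_trans (Ye_le _ _ _) (Qe_le1 _ _).
Qed.

Lemma survive_G t : survive P sg iota T t = (Gt iota T t ysg)%:E.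
Proof.
rewrite /survive.
have E s : \esum_(m in [set: M]) reach P sg iota T t s m =
    \sum_(w : (t.+1).-tuple S | head iota w == s) Qe t w.
  under eq_esum do rewrite reach_mu.
  by rewrite esum_sum // => m w _ _; exact: mu_ge0.
under eq_bigr do rewrite E.
rewrite (@head_exchange S _ _ _ _ iota T (fun w : seq S => Qe t w)) /Gt -sumEFin.
apply: eq_bigr => w _; rewrite -sumEFin -Qe_sum.
by apply: eq_bigr => a _; rewrite ysgE size_tuple.
Qed.

End Hist.
Section Real.
Variables (R : realType) (S Act : finType) (P : S -> Act -> S -> R).
Variables (iota : S) (T : {set S}).
Hypothesis P0 : forall s a t, (0 <= P s a t)%R.
Hypothesis hen : forall s, exists a, enabled P s a.
Variable y : seq S -> Act -> R.
Hypothesis hK : Kc P iota T y.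

Let c0 : forall s, \sum_a y [:: s] a = if s == iota then 1 else 0.
Proof. by case: hK. Qed.
Let c1 : forall s' h, h != [::] -> \sum_a y (s' :: h) a =
    if head iota h \notin T then \sum_a y h a * P (head iota h) a s' else 0.
Proof. by case: hK => _ []. Qed.
Let cen : forall h a, ~ enabled P (head iota h) a -> y h a = 0.
Proof. by case: hK => _ [_ []]. Qed.
Let y0 h a : 0 <= y h a. Proof. by case: hK => _ [_ [_ /(_ h a) []]]. Qed.

Definition Qy h := \sum_a y h a.

Lemma Qy_ge0 h : 0 <= Qy h.
Proof. by apply: sumr_ge0 => a _. Qed.

Definition sgy : strategy R S Act (seq S) := Strategy
  (fun m => if m == [:: iota] then 1 else 0)
  (fun s m a => if (head iota m == s) && (0 < Qy m) then y m a / Qy m else dflt hen s a)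
  (fun m s a s' m' => if m' == s' :: m then 1 else 0).

Lemma sgy_valid : valid_strategy P sgy.
Proof.
split; [|split].
- split; first by move=> m /=; case: ifP.
  rewrite (esum_single (t0 := [:: iota])) /= ?eqxx // => m.
  by move=> /negbTE ->.
- move=> s m /=; case E: ((head iota m == s) && (0 < Qy m)); last exact: dflt_ok.
  case/andP: E => /eqP hs Qp.
  split; first by move=> a; rewrite divr_ge0 // Qy_ge0.
  split; first by rewrite -mulr_suml divff // gt_eqF.
  move=> a pa; have [//|na] := pselect (enabled P s a).
  by move: pa; rewrite cen ?hs // mul0r ltxx.
- move=> m s a s'; split; first by move=> m' /=; case: ifP.
  rewrite (esum_single (t0 := s' :: m)) /= ?eqxx // => m'.
  by move=> /negbTE ->.
Qed.

Lemma sum_pick (V : Type) (idx : V) (op : Monoid.com_law idx) (x : S) (G : S -> V) :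
  \big[op/idx]_(s : S | s \notin T) (if x == s then G s else idx) =
  if x \notin T then G x else idx.
Proof.
rewrite -big_mkcondr /=; case: (boolP (x \in T)) => hT /=.
  rewrite big_pred0 // => s; apply/negP => /andP[sT /eqP hs].
  by move: sT; rewrite -hs hT.
rewrite (big_pred1 x) // => s /=; apply/andP/eqP.
  by case=> _ /eqP.
by move=> ->; split.
Qed.

Lemma reach_sgy t s m : reach P sgy iota T t s m =
  if (size m == t.+1) && (head iota m == s) then (Qy m)%:E else 0%E.
Proof.
elim: t s m => [|t IH] s' m'.
  rewrite /=; case: m' => [|x [|x' r]] /=.
  - by case: ifP.
  - rewrite eqseq_cons andbT /Qy c0.
    case: (eqVneq x s') => [->|ne]; first by case: (s' == iota).
    case: (eqVneq s' iota) => [e|] //.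
    by rewrite -e (negbTE ne).
  - by rewrite eqseq_cons andbF; case: ifP.
have reach_ge0 s m : (0 <= reach P sgy iota T t s m)%E.
  by rewrite IH; case: ifP; rewrite ?lee_fin ?Qy_ge0.
rewrite /=; case: m' => [|x m0].
  rewrite big1 // => s _; rewrite big1 // => a _.
  by rewrite esum1 // => m _; rewrite /= mulr0 mule0.
have E s a : (\esum_(m in [set: seq S]) (reach P sgy iota T t s m *
    (st_act sgy s m a * P s a x * st_upd sgy m s a x (x :: m0))%:E)%E) =
    (reach P sgy iota T t s m0 * (st_act sgy s m0 a * P s a x)%:E)%E.
  rewrite (esum_single (t0 := m0)) /=.
  - by rewrite eqxx mulr1.
  - move=> m nm; rewrite eqseq_cons eqxx /=.
    have -> : (m0 == m) = false by apply/negbTE; rewrite eq_sym.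
    by rewrite mulr0 mule0.
  - by apply: mule_ge0 => //; rewrite eqxx mulr1 lee_fin mulr_ge0 //; case: (sgy_valid) => _ [/(_ s m0) [+ _] _]; apply.
have E' a s : (\esum_(m in [set: seq S]) (reach P sgy iota T t s m *
    (st_act sgy s m a * P s a s' * st_upd sgy m s a s' (x :: m0))%:E)%E) =
    if x == s' then (reach P sgy iota T t s m0 * (st_act sgy s m0 a * P s a x)%:E)%E
    else 0%E.
  case: (eqVneq x s') => [<-|ne]; first exact: E.
  rewrite esum1 // => m _ /=; rewrite eqseq_cons (negbTE ne) /= mulr0 mule0 //.
under eq_bigr do under eq_bigr do rewrite E'.
rewrite /= [head iota (x :: m0) == s']eq_sym.
case: (eqVneq s' x) => [<-|ne]; last first.
  by rewrite andbF big1 // => s _; rewrite big1.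
rewrite andbT eqSS.
under eq_bigr do under eq_bigr do rewrite IH.
case: (boolP (size m0 == t.+1)) => hs /=; last first.
  by rewrite big1 // => s _; rewrite big1 // => a _; rewrite mul0e.
have m0n : m0 != [::] by apply/eqP => e; move: hs; rewrite e.
rewrite /Qy c1 //.
have F s : \sum_a ((if head iota m0 == s then (Qy m0)%:E else 0%E) *
      (st_act sgy s m0 a * P s a s')%:E)%E =
    if head iota m0 == s then (\sum_a y m0 a * P s a s')%:E else 0%E.
  case: (eqVneq (head iota m0) s) => [<-|_]; last first.
    by rewrite big1 // => a _; rewrite mul0e.
  rewrite -[RHS]sumEFin; apply: eq_bigr => a _; rewrite -EFinM /=; congr EFin.
  rewrite eqxx /=; case: (boolP (0 < Qy m0)) => Qp.
    by rewrite mulrA mulrCA divff ?mulr1 // gt_eqF.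
  have Q0 : Qy m0 = 0 by apply/eqP; rewrite eq_le Qy_ge0 andbT leNgt.
  have -> : y m0 a = 0.
    apply/eqP; rewrite eq_le y0 andbT -Q0 /Qy (bigD1 a) //= lerDl.
    by apply: sumr_ge0 => b _.
  by rewrite Q0 !mul0r.
under eq_bigr do rewrite F.
rewrite (@sum_pick _ _ _ (head iota m0) (fun s => (\sum_a y m0 a * P s a s')%:E)).
by case: ifP.
Qed.

Lemma survive_sgy t : survive P sgy iota T t = (Gt iota T t y)%:E.
Proof.
rewrite /survive.
have E s : \esum_(m in [set: seq S]) reach P sgy iota T t s m =
    \sum_(w : (t.+1).-tuple S | head iota w == s) (Qy w)%:E.
  under eq_esum do rewrite reach_sgy.
  transitivity (\esum_(m in [set: seq S]) (if size m == t.+1 then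
      (if head iota m == s then (Qy m)%:E else 0%E) else 0%E)).
    by apply: eq_esum => m _; case: (size m == t.+1).
  rewrite esum_tuple; last by move=> m; case: ifP; rewrite ?lee_fin ?Qy_ge0.
  by rewrite [RHS]big_mkcond.
under eq_bigr do rewrite E.
by rewrite (@head_exchange S _ _ _ _ iota T (fun w : seq S => (Qy w)%:E)) sumEFin.
Qed.

End Real.
Section Part1.
Variables (R : realType) (S Act : finType) (P : S -> Act -> S -> R).
Variables (k : nat) (iota : 'I_k -> S) (T : 'I_k -> {set S}).

Definition I1 := ('I_k * (seq S * Act))%type.
Definition X1 := prod_topology (fun _ : I1 => R).
Definition yi (x : X1) (i : 'I_k) : seq S -> Act -> R := fun h a => x (i, (h, a)).
Definition K1 : set X1 := [set x | forall i, Kc P (iota i) (T i) (yi x i)].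

Lemma cont_proj1 (j : I1) : continuous (fun x : X1 => x j).
Proof. exact: (@proj_continuous I1 (fun _ => R) j). Qed.

Lemma closed_eqfg (X : topologicalType) (f g : X -> R) :
  continuous f -> continuous g -> closed [set x | f x = g x].
Proof.
move=> cf cg; have -> : [set x | f x = g x] = [set x | (fun v => v = 0) (f x - g x)].
  by apply/seteqP; split => x /=; [move=> ->; rewrite subrr|move/eqP; rewrite subr_eq0 => /eqP].
apply: (@closed_pre R X (fun x => f x - g x) [set v | v = 0]); last exact: closed_eq.
apply: cont_add => //; move=> x; exact: (@continuousN _ R^o _ _ x (cg x)).
Qed.

Lemma closed_K1 : closed K1.
Proof.
apply: closed_all => i; apply: closed_and; last apply: closed_and; last apply: closed_and.
- apply: closed_all => s; apply: closed_eqfg; last exact: cont_cst.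
  by apply: cont_bigsum => a; exact: cont_proj1.
- apply: closed_all => s'; apply: closed_all => h; apply: closed_imp.
  apply: closed_eqfg; first by apply: cont_bigsum => a; exact: cont_proj1.
  case: (head (iota i) h \notin T i); last exact: cont_cst.
  apply: cont_bigsum => a; apply: cont_mul; [exact: cont_proj1|exact: cont_cst].
- apply: closed_all => h; apply: closed_all => a; apply: closed_imp.
  apply: closed_eqfg; [exact: cont_proj1|exact: cont_cst].
- apply: closed_all => h; apply: closed_all => a; apply: closed_and.
    apply: (closed_pre (A := [set v | 0 <= v])); [exact: cont_proj1|exact: closed_ge].
  apply: (closed_pre (A := [set v | v <= 1])); [exact: cont_proj1|exact: closed_le].
Qed.

Lemma compact_K1 : compact K1.
Proof.
apply: (subclosed_compact closed_K1 _ (B := [set x : X1 | forall j, `[(0:R), 1]%classic (x j)])).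
  exact: (@tychonoff I1 (fun _ => R) (fun _ => `[(0:R), 1]%classic)
    (fun _ => @segment_compact R 0 1)).
move=> x Kx [i [h a]] /=; rewrite in_itv /=.
have [_ [_ [_ /(_ h a) [h0 h1]]]] := Kx i.
by rewrite /yi in h0 h1; rewrite h0 h1.
Qed.

Definition g1 (t : nat) (x : X1) : R := \prod_(i < k) Gt (iota i) (T i) t (yi x i).

Lemma cont_g1 t : continuous (g1 t).
Proof.
apply: cont_bigprod => i; apply: cont_bigsum => w; apply: cont_bigsum => a.
exact: cont_proj1.
Qed.

Hypothesis hMDP : is_MDP P.
Let P0 s a t : 0 <= P s a t. Proof. by case: hMDP => /(_ s a t) /andP[]. Qed.
Let P1 s a t : P s a t <= 1. Proof. by case: hMDP => /(_ s a t) /andP[]. Qed.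
Let hen : forall s, exists a, enabled P s a. Proof. by case: hMDP. Qed.

Definition embed1 (Mem : 'I_k -> choiceType) (pi : forall i, strategy R S Act (Mem i)) : X1 :=
  fun j => ysg P (iota j.1) (T j.1) (pi j.1) j.2.1 j.2.2.

Lemma part1 : exists (Mem : 'I_k -> choiceType) (pi : forall i, strategy R S Act (Mem i)),
     (forall i, valid_strategy P (pi i)) /\
     EMHit P iota T pi = ereal_inf (values_Pi P iota T).
Proof.
have emb_K Mem (pi : forall i, strategy R S Act (Mem i)) :
    (forall i, valid_strategy P (pi i)) -> K1 (embed1 pi).
  by move=> hv i; exact: (ysg_K (iota i) (T i) P0 P1 (hv i)).
have emb_V Mem (pi : forall i, strategy R S Act (Mem i)) :
    (forall i, valid_strategy P (pi i)) -> EMHit P iota T pi = Vser g1 (embed1 pi).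
  move=> hv; rewrite /EMHit /Vser; apply: eq_eseriesr => t _; rewrite /g1 -prodEFin.
  by apply: eq_bigr => i _; rewrite (survive_G _ _ P0 P1 (hv i)).
pose pi0 (i : 'I_k) : strategy R S Act unit :=
  Strategy (fun _ => 1) (fun s _ a => dflt hen s a) (fun _ _ _ _ _ => 1).
have sum1 : \sum_(m : unit) (1 : R) = 1 by rewrite (big_pred1 tt) // => -[].
have v0 i : valid_strategy P (pi0 i).
  split; first by apply/is_distr_fin; split.
  split; first by move=> s m; exact: dflt_ok.
  by move=> m s a s'; apply/is_distr_fin; split.
have ne : K1 !=set0 by exists (@embed1 (fun=> unit) pi0); exact: emb_K.
have g0 t x : K1 x -> 0 <= g1 t x.
  move=> Kx; apply: prodr_ge0 => i _; apply: sumr_ge0 => w _; apply: sumr_ge0 => a _.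
  by have [_ [_ [_ /(_ w a) []]]] := Kx i.
have [x Kx xmin] := min_exists compact_K1 ne cont_g1 g0.
pose pis (i : 'I_k) := sgy (iota i) hen (yi x i).
have vx i : valid_strategy P (pis i) by apply: sgy_valid; exact: Kx.
have EV : EMHit P iota T pis = Vser g1 x.
  rewrite /EMHit /Vser; apply: eq_eseriesr => t _; rewrite /g1 -prodEFin.
  by apply: eq_bigr => i _; rewrite survive_sgy //; exact: Kx.
exists (fun _ => (seq S : choiceType)), pis; split => //.
rewrite EV; apply/eqP; rewrite eq_le; apply/andP; split.
  apply: le_ereal_inf_tmp => _ [Mem [pi [hv ->]]].
  rewrite (emb_V _ _ hv); apply: xmin; exact: emb_K.
apply: ereal_inf_lbound; exists (fun _ => (seq S : choiceType)), pis.
by split.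
Qed.
End Part1.

Unset Implicit Arguments.

Theorem mainTheorem3 (R : realType) (S Act : finType) (P : S -> Act -> S -> R)
    (k : nat) (iota : 'I_k -> S) (T : 'I_k -> {set S}) :
  is_MDP P -> (0 < k)%N ->
  (forall i, iota i \notin T i) -> (forall i, T i != finset.set0) ->
  (exists (Mem : 'I_k -> choiceType) (pi : forall i, strategy R S Act (Mem i)),
     (forall i, valid_strategy P (pi i)) /\
     EMHit P iota T pi = ereal_inf (values_Pi P iota T)) /\
  (forall n : nat, (0 < n)%N ->
     exists (Mem : 'I_k -> finType) (pi : forall i, strategy R S Act (Mem i)),
       (forall i, #|Mem i| <= n)%N /\
       (forall i, valid_strategy P (pi i)) /\
       EMHit P iota T pi = ereal_inf (values_Pin P iota T n)).
Proof.
move=> hMDP _ _ _; split; first exact: part1.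
by move=> n n0; exact: part2.
Qed.
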